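(* Let $u_{1:T}=(u_1,\ldots,u_T)\in(\mathbb{R}^d)^T$, let $1\le k\le T$ and $\tau\in[0:T-k]$, and let $w_{1:T}$ be obtained from $u_{1:T}$ by local averaging: $w_t=u_t$ for $t\notin[\tau+1:\tau+k]$ and $w_{\tau+1}=\cdots=w_{\tau+k}=k^{-1}\sum_{i=1}^k u_{\tau+i}$. Let $\bar u=T^{-1}\sum_t u_t$ and $\bar w=T^{-1}\sum_t w_t$. Then 1. $\sum_{t=1}^{T-1}\|w_{t+1}-w_t\|_2\le\sum_{t=1}^{T-1}\|u_{t+1}-u_t\|_2$; 2. $\sum_{t=1}^T\|w_t-\bar w\|_2\le\sum_{t=1}^T\|u_t-\bar u\|_2$; 3. $\sum_{t=1}^T\|w_t-\bar w\|_2^2\le\sum_{t=1}^T\|u_t-\bar u\|_2^2$; 4. $\sum_{t=1}^T\|w_t\|_2\le\sum_{t=1}^T\|u_t\|_2$ and $\sum_{t=1}^T\|w_t\|_2^2\le\sum_{t=1}^T\|u_t\|_2^2$. *)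

(* Defs.v *)
(* vectors in R^d are row vectors 'rV[R]_d over a real closed
   field R (the reals are an instance). Sequences u_{1:T} are nat-indexed,
   only indices 1..T are used. *)
From HB Require Import structures.
From mathcomp Require Import all_boot all_order all_algebra.
Set Implicit Arguments. Unset Strict Implicit. Unset Printing Implicit Defensive.
Import Order.TTheory GRing.Theory Num.Theory.
Local Open Scope ring_scope.

Definition norm2 (R : rcfType) (d : nat) (v : 'rV[R]_d) : R :=
  Num.sqrt (\sum_(j < d) (v ord0 j) ^+ 2).

Definition local_avg (R : rcfType) (d : nat) (u : nat -> 'rV[R]_d)
    (k tau : nat) : nat -> 'rV[R]_d :=
  fun t => if ((tau < t) && (t <= tau + k))%N
           then (k%:R)^-1 *: \sum_(1 <= i < k.+1) u (tau + i)%N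
           else u t.

Definition seq_mean (R : rcfType) (d : nat) (u : nat -> 'rV[R]_d) (T : nat)
  : 'rV[R]_d := (T%:R)^-1 *: \sum_(1 <= t < T.+1) u t.

(* Main.v *)
Require Import Defs.
From HB Require Import structures.
From mathcomp Require Import all_boot all_order all_algebra.
From mathcomp Require Import ring lra zify.
Import Order.TTheory GRing.Theory Num.Theory.
Local Open Scope ring_scope.

Lemma CS_seq (R : rcfType) (I : Type) (r : seq I) (a b : I -> R) :
  (\sum_(i <- r) a i * b i) ^+ 2 <=
  (\sum_(i <- r) a i ^+ 2) * (\sum_(i <- r) b i ^+ 2).
Proof.
have H : 0 <= \sum_(i <- r) \sum_(j <- r) (a i * b j - a j * b i) ^+ 2.
  by apply: sumr_ge0 => i _; apply: sumr_ge0 => j _; exact: sqr_ge0.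
have E : \sum_(i <- r) \sum_(j <- r) (a i * b j - a j * b i) ^+ 2 =
   2 * ((\sum_(i <- r) a i ^+ 2) * (\sum_(i <- r) b i ^+ 2)
        - (\sum_(i <- r) a i * b i) ^+ 2).
  rewrite expr2 !big_distrlr /= -sumrB mulr_sumr.
  have E2 : \sum_(i <- r) \sum_(j <- r) (a i * b j - a j * b i) ^+ 2 =
     \sum_(i <- r) \sum_(j <- r) (2 * (a i ^+ 2 * b j ^+ 2 - a i * b i * (a j * b j))
        + (a j ^+ 2 * b i ^+ 2 - a i ^+ 2 * b j ^+ 2)).
    by apply: eq_bigr => i _; apply: eq_bigr => j _; ring.
  rewrite E2.
  under eq_bigr do rewrite big_split /=.
  rewrite big_split /=.
  under [X in _ + X = _]eq_bigr do rewrite sumrB.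
  have X : \sum_(i <- r) \sum_(j <- r) a j ^+ 2 * b i ^+ 2 =
     \sum_(i <- r) \sum_(j <- r) a i ^+ 2 * b j ^+ 2 by rewrite exchange_big.
  rewrite sumrB X subrr addr0.
  apply: eq_bigr => i _; rewrite -sumrB mulr_sumr; apply: eq_bigr => j _.
  by [].
move: H; rewrite E => H.
have : 0 <= (\sum_(i <- r) a i ^+ 2) * (\sum_(i <- r) b i ^+ 2) - (\sum_(i <- r) a i * b i) ^+ 2.
  by rewrite -(pmulr_rge0 _ (ltr0Sn _ 1)).
by rewrite subr_ge0.
Qed.

Section N.
Context (R : rcfType) (d : nat).
Implicit Types (a b v : 'rV[R]_d).

Lemma sq_ge0 v : 0 <= \sum_(j < d) (v ord0 j) ^+ 2.
Proof. by apply: sumr_ge0 => j _; exact: sqr_ge0. Qed.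

Lemma norm2_ge0 v : 0 <= norm2 v.
Proof. exact: sqrtr_ge0. Qed.

Lemma norm2_sqr v : norm2 v ^+ 2 = \sum_(j < d) (v ord0 j) ^+ 2.
Proof. by rewrite /norm2 sqr_sqrtr // sq_ge0. Qed.

Lemma norm2_0 : norm2 (0 : 'rV[R]_d) = 0.
Proof. by rewrite /norm2 big1 ?sqrtr0 // => j _; rewrite mxE expr0n. Qed.

Lemma norm2Z (c : R) v : norm2 (c *: v) = `|c| * norm2 v.
Proof.
rewrite /norm2 -sqrtr_sqr -sqrtrM ?sqr_ge0 // mulr_sumr.
by congr Num.sqrt; apply: eq_bigr => j _; rewrite mxE exprMn.
Qed.

Lemma norm2N v : norm2 (- v) = norm2 v.
Proof. by rewrite -scaleN1r norm2Z normrN normr1 mul1r. Qed.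

Lemma norm2_sym a b : norm2 (a - b) = norm2 (b - a).
Proof. by rewrite -norm2N opprB. Qed.

Lemma dot_le a b : \sum_(j < d) a ord0 j * b ord0 j <= norm2 a * norm2 b.
Proof.
apply: le_trans (ler_norm _) _.
rewrite -sqrtr_sqr /norm2 -sqrtrM ?sq_ge0 // ler_sqrt; last first.
  by apply: mulr_ge0; apply: sq_ge0.
exact: CS_seq.
Qed.

Lemma norm2D a b : norm2 (a + b) <= norm2 a + norm2 b.
Proof.
have h0 : 0 <= norm2 a + norm2 b by apply: addr_ge0; apply: norm2_ge0.
rewrite -[X in _ <= X]ger0_norm // -sqrtr_sqr {1}/norm2 ler_sqrt ?sqr_ge0 //.
have -> : \sum_(j < d) (a + b) ord0 j ^+ 2 =
  \sum_(j < d) (a ord0 j) ^+ 2 + \sum_(j < d) (b ord0 j) ^+ 2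
   + 2 * \sum_(j < d) a ord0 j * b ord0 j.
  rewrite mulr_sumr -!big_split /=; apply: eq_bigr => j _; rewrite mxE; ring.
rewrite -!norm2_sqr.
have := dot_le a b; nra.
Qed.

Lemma norm2_sum (I : Type) (r : seq I) (P : pred I) (F : I -> 'rV[R]_d) :
  norm2 (\sum_(i <- r | P i) F i) <= \sum_(i <- r | P i) norm2 (F i).
Proof.
elim/big_rec2: _ => [|i y1 y2 _ h]; first by rewrite norm2_0.
by apply: le_trans (norm2D _ _) _; rewrite lerD2l.
Qed.
End N.

Lemma QM (R : rcfType) (k : nat) (y : nat -> R) :
  (\sum_(1 <= i < k.+1) y i) ^+ 2 <= k%:R * \sum_(1 <= i < k.+1) y i ^+ 2.
Proof.
have := @CS_seq R _ (index_iota 1 k.+1) y (fun _ => 1).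
under eq_bigr do rewrite mulr1.
under [X in _ <= _ * X]eq_bigr do rewrite expr1n.
by rewrite sumr_const_nat subSS subn0 mulrC.
Qed.

Section Avg.
Context (R : rcfType) (d : nat) (u : nat -> 'rV[R]_d) (k tau : nat) (hk : (1 <= k)%N).

Let K : R := k%:R.
Let Kgt0 : 0 < K. Proof. by rewrite /K ltr0n. Qed.
Let Kne0 : K != 0. Proof. by rewrite gt_eqF. Qed.

Definition mavg : 'rV[R]_d := K^-1 *: \sum_(1 <= i < k.+1) u (tau + i)%N.

Lemma avg_sub c : mavg - c = K^-1 *: \sum_(1 <= i < k.+1) (u (tau + i)%N - c).
Proof.
rewrite sumrB sumr_const_nat subSS subn0 scalerBr /mavg; congr (_ - _).
by rewrite -scaler_nat scalerA mulVf // scale1r.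
Qed.

Lemma J1 c : norm2 (mavg - c) <= K^-1 * \sum_(1 <= i < k.+1) norm2 (u (tau + i)%N - c).
Proof.
rewrite avg_sub norm2Z ger0_norm; last by rewrite invr_ge0 ltW.
by apply: ler_wpM2l; [rewrite invr_ge0 ltW | exact: norm2_sum].
Qed.

Lemma J1' c : norm2 (mavg - c) *+ k <= \sum_(1 <= i < k.+1) norm2 (u (tau + i)%N - c).
Proof.
have := J1 c; rewrite -mulr_natr -/K => h.
have -> : \sum_(1 <= i < k.+1) norm2 (u (tau + i)%N - c) =
   K * (K^-1 * \sum_(1 <= i < k.+1) norm2 (u (tau + i)%N - c)).
  by rewrite mulrA divff // mul1r.
by rewrite mulrC ler_pM2l.
Qed.

Lemma J2 c : norm2 (mavg - c) ^+ 2 *+ k <=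
   \sum_(1 <= i < k.+1) norm2 (u (tau + i)%N - c) ^+ 2.
Proof.
have h1 := J1 c.
have hq := @QM R k (fun i => norm2 (u (tau + i)%N - c)).
rewrite -/K in hq.
set S := \sum_(1 <= i < k.+1) norm2 (u (tau + i)%N - c) in h1 hq.
set Q := \sum_(1 <= i < k.+1) norm2 (u (tau + i)%N - c) ^+ 2 in hq *.
set n := norm2 (mavg - c) in h1 *.
set s := K^-1 * S in h1.
have hS : S = K * s by rewrite /s mulrA divff // mul1r.
rewrite hS in hq.
have h2 : K * s ^+ 2 <= Q.
  by rewrite -(ler_pM2l Kgt0); apply: le_trans hq; rewrite le_eqVlt; apply/orP; left; apply/eqP; ring.
have n0 : 0 <= n by exact: norm2_ge0.
have h3 : n ^+ 2 <= s ^+ 2 by nra.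
rewrite -mulr_natr -/K. apply: le_trans h2; rewrite mulrC ler_pM2l //.
Qed.
End Avg.
Arguments mavg {R d}.

Section Core.
Context (R : rcfType) (d : nat) (u : nat -> 'rV[R]_d) (k tau : nat) (hk : (1 <= k)%N).

Let D t := norm2 (u t.+1 - u t).

Lemma D_ge0 t : 0 <= D t. Proof. exact: norm2_ge0. Qed.

Lemma path_le i j : (i <= j)%N -> norm2 (u j - u i) <= \sum_(i <= t < j) D t.
Proof.
move=> /subnK <-; elim: (j - i)%N => [|n IH].
  by rewrite add0n subrr norm2_0 big_geq.
rewrite addSn big_nat_recr ?leq_addl //=.
have -> : u (n + i).+1 - u i = (u (n + i).+1 - u (n + i)%N) + (u (n + i)%N - u i).
  by rewrite addrA subrK.
apply: le_trans; first exact: norm2D. rewrite addrC; apply: lerD => //.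
Qed.

Lemma sum_D_ge0 m n : 0 <= \sum_(m <= t < n) D t.
Proof. by apply: sumr_ge0 => t _; exact: D_ge0. Qed.

Lemma core (p q : bool) :
  (if p then norm2 (mavg u k tau - u tau) else 0) +
  (if q then norm2 (u (tau + k).+1 - mavg u k tau) else 0) <=
  \sum_((if p then tau else tau.+1) <= t < (if q then (tau + k).+1 else (tau + k)%N)) D t.
Proof.
set lo := (if p then tau else tau.+1).
set hi := (if q then (tau + k).+1 else (tau + k)%N).
set L := \sum_(lo <= t < hi) D t.
set m := mavg u k tau.
have Kgt0 : 0 < (k%:R : R) by rewrite ltr0n.
apply: (@le_trans _ _ ((k%:R)^-1 * \sum_(1 <= i < k.+1)
   ((if p then norm2 (u (tau + i)%N - u tau) else 0) +
    (if q then norm2 (u (tau + i)%N - u (tau + k).+1) else 0)))).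
  rewrite big_split /= mulrDr; apply: lerD.
    case: p {lo L} => //; first exact: J1.
    by rewrite big1 ?mulr0.
  case: q {hi L} => //; last by rewrite big1 ?mulr0.
  by rewrite norm2_sym; exact: J1.
apply: (@le_trans _ _ ((k%:R)^-1 * \sum_(1 <= i < k.+1) L)); last first.
  by rewrite sumr_const_nat subSS subn0 -[L *+ k]mulr_natl mulrA mulVf ?mul1r // gt_eqF.
apply: ler_wpM2l; first by rewrite invr_ge0 ltW.
apply: ler_sum_nat => i /andP[i1 ik].
have hlo : (lo <= tau + i)%N by rewrite /lo; destruct p; lia.
have hhi : (tau + i <= hi)%N by rewrite /hi; destruct q; lia.
rewrite /L (big_cat_nat (n := (tau + i)%N)) //=.
apply: lerD.
  rewrite /lo; destruct p; first by apply: path_le; lia.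
  exact: sum_D_ge0.
rewrite /hi; destruct q; last exact: sum_D_ge0.
by rewrite norm2_sym; apply: path_le; lia.
Qed.
End Core.

Section Main.
Context (R : rcfType) (d T k tau : nat) (u : nat -> 'rV[R]_d)
    (hk1 : (1 <= k)%N) (hkT : (k <= T)%N) (htau : (tau <= T - k)%N).

Let w := local_avg u k tau.
Let m := mavg u k tau.

Lemma w_in t : (tau < t <= tau + k)%N -> w t = m.
Proof. by move=> h; rewrite /w /local_avg h. Qed.

Lemma w_out t : ~~ (tau < t <= tau + k)%N -> w t = u t.
Proof. by move=> /negbTE h; rewrite /w /local_avg h. Qed.

Lemma split3 (V : zmodType) (F : nat -> V) :
  \sum_(1 <= t < T.+1) F t = \sum_(1 <= t < tau.+1) F t +
    \sum_(tau.+1 <= t < (tau + k).+1) F t + \sum_((tau + k).+1 <= t < T.+1) F t.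
Proof.
rewrite -(big_cat_nat (n := tau.+1)) //; last by lia.
by rewrite -(big_cat_nat (n := (tau + k).+1)) //; lia.
Qed.

Lemma shift (V : zmodType) (G : nat -> V) :
  \sum_(tau.+1 <= t < (tau + k).+1) G t = \sum_(1 <= i < k.+1) G (tau + i)%N.
Proof.
rewrite -(add1n tau) big_addn.
have -> : ((tau + k).+1 - tau = k.+1)%N by lia.
by apply: eq_bigr => i _; rewrite addnC.
Qed.

Lemma assembly (phi : 'rV[R]_d -> R) :
  phi m *+ k <= \sum_(1 <= i < k.+1) phi (u (tau + i)%N) ->
  \sum_(1 <= t < T.+1) phi (w t) <= \sum_(1 <= t < T.+1) phi (u t).
Proof.
move=> H; rewrite !split3; apply: lerD; first apply: lerD.
- by rewrite le_eqVlt; apply/orP; left; apply/eqP; apply: eq_big_nat => t ht;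
    rewrite w_out //; lia.
- rewrite (shift _ (fun t => phi (u t))); apply: le_trans H; rewrite le_eqVlt; apply/orP; left; apply/eqP.
  rewrite (eq_big_nat _ _ (F2 := fun _ => phi m)); last by move=> t ht; rewrite w_in //; lia.
  by rewrite sumr_const_nat; congr (_ *+ _); lia.
- by rewrite le_eqVlt; apply/orP; left; apply/eqP; apply: eq_big_nat => t ht;
    rewrite w_out //; lia.
Qed.

Lemma mean_eq : seq_mean w T = seq_mean u T.
Proof.
rewrite /seq_mean; congr (_ *: _); rewrite !split3; congr (_ + _ + _).
- by apply: eq_big_nat => t ht; rewrite w_out //; lia.
- rewrite (eq_big_nat _ _ (F2 := fun _ => m)); last by move=> t ht; rewrite w_in //; lia.
  rewrite shift sumr_const_nat.
  have -> : ((tau + k).+1 - tau.+1 = k)%N by lia.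
  rewrite -scaler_nat /m /mavg scalerA divff ?scale1r //.
  by rewrite gt_eqF // ltr0n.
- by apply: eq_big_nat => t ht; rewrite w_out //; lia.
Qed.

Let E t := norm2 (w t.+1 - w t).

Lemma mid_E (p q : bool) : p = (0 < tau)%N -> q = (tau + k < T)%N ->
  \sum_((if p then tau else tau.+1) <= t < (if q then (tau + k).+1 else (tau + k)%N)) E t =
  (if p then norm2 (m - u tau) else 0) +
  (if q then norm2 (u (tau + k).+1 - m) else 0).
Proof.
move=> hp hq.
have mid0 : \sum_(tau.+1 <= t < tau + k) E t = 0.
  rewrite big_nat_cond big1 // => t /andP[/andP[h1 h2] _].
  by rewrite /E !w_in ?subrr ?norm2_0 //; lia.
have -> : \sum_((if p then tau else tau.+1) <= t < (if q then (tau + k).+1 else (tau + k)%N)) E t =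
  (if p then E tau else 0) + \sum_(tau.+1 <= t < (if q then (tau + k).+1 else (tau + k)%N)) E t.
  case: p hp => hp; last by rewrite add0r.
  by rewrite big_ltn //; case: q hq => hq; lia.
have -> : \sum_(tau.+1 <= t < (if q then (tau + k).+1 else (tau + k)%N)) E t =
  \sum_(tau.+1 <= t < tau + k) E t + (if q then E (tau + k)%N else 0).
  case: q hq => hq; last by rewrite addr0.
  by rewrite big_nat_recr //=; lia.
rewrite mid0 add0r; congr (_ + _).
  case: p hp => hp //; rewrite /E w_in; last by lia.
  by rewrite w_out //; lia.
case: q hq => hq //; rewrite /E w_out; last by lia.
by rewrite w_in //; lia.
Qed.

Lemma tv_gen (p q : bool) : p = (0 < tau)%N -> q = (tau + k < T)%N ->
  \sum_(1 <= t < T) norm2 (w t.+1 - w t) <= \sum_(1 <= t < T) norm2 (u t.+1 - u t).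
Proof.
move=> hp hq.
set lo := (if p then tau else tau.+1).
set hi := (if q then (tau + k).+1 else (tau + k)%N).
have h1 : (1 <= lo)%N by rewrite /lo; destruct p => /=; lia.
have h2 : (lo <= hi)%N by rewrite /lo /hi; destruct p => /=; destruct q => /=; lia.
have h3 : (hi <= T)%N by rewrite /hi; destruct q => /=; lia.
have sp (F : nat -> R) : \sum_(1 <= t < T) F t =
   \sum_(1 <= t < lo) F t + \sum_(lo <= t < hi) F t + \sum_(hi <= t < T) F t.
  by rewrite -(big_cat_nat (n:=lo)) // -(big_cat_nat (n:=hi)) //; lia.
rewrite !sp; apply: lerD; first apply: lerD.
- rewrite le_eqVlt; apply/orP; left; apply/eqP; apply: eq_big_nat => t /andP[ht1 ht2].
  have htau' : (t < tau)%N by move: ht2; rewrite /lo; destruct p => /=; lia.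
  by rewrite !w_out //; lia.
- have := mid_E p q hp hq; rewrite -/lo -/hi /E => ->.
  exact: core.
- rewrite le_eqVlt; apply/orP; left; apply/eqP; apply: eq_big_nat => t /andP[ht1 ht2].
  have htau' : (tau + k < t)%N by move: ht1; rewrite /hi; destruct q => /=; lia.
  by rewrite !w_out //; lia.
Qed.
End Main.


Theorem lemma10 (R : rcfType) (d T k tau : nat) (u : nat -> 'rV[R]_d)
    (hk1 : (1 <= k)%N) (hkT : (k <= T)%N) (htau : (tau <= T - k)%N) :
  let w := local_avg u k tau in
  let ub := seq_mean u T in
  let wb := seq_mean w T in
  [/\ \sum_(1 <= t < T) norm2 (w t.+1 - w t)
        <= \sum_(1 <= t < T) norm2 (u t.+1 - u t),
      \sum_(1 <= t < T.+1) norm2 (w t - wb)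
        <= \sum_(1 <= t < T.+1) norm2 (u t - ub),
      \sum_(1 <= t < T.+1) norm2 (w t - wb) ^+ 2
        <= \sum_(1 <= t < T.+1) norm2 (u t - ub) ^+ 2,
      \sum_(1 <= t < T.+1) norm2 (w t)
        <= \sum_(1 <= t < T.+1) norm2 (u t)
    & \sum_(1 <= t < T.+1) norm2 (w t) ^+ 2
        <= \sum_(1 <= t < T.+1) norm2 (u t) ^+ 2].
Proof.
move=> w ub wb.
have hwb : wb = ub by exact: (@mean_eq R d T k tau u hk1 hkT htau).
rewrite hwb; split.
- exact: (@tv_gen R d T k tau u hk1 hkT htau (0 < tau)%N (tau + k < T)%N erefl erefl).
- apply: (@assembly R d T k tau u hk1 hkT htau (fun x => norm2 (x - ub))).
  exact: J1'.
- apply: (@assembly R d T k tau u hk1 hkT htau (fun x => norm2 (x - ub) ^+ 2)).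
  exact: J2.
- apply: (@assembly R d T k tau u hk1 hkT htau (fun x => norm2 x)).
  have := @J1' R d u k tau hk1 0; rewrite subr0.
  by under eq_bigr do rewrite subr0.
- apply: (@assembly R d T k tau u hk1 hkT htau (fun x => norm2 x ^+ 2)).
  have := @J2 R d u k tau hk1 0; rewrite subr0.
  by under eq_bigr do rewrite subr0.
Qed.
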